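(* Let $\mathcal{S}$ be a finite elation generalized quadrangle of order $(s,t)$ with elation group $G$ and associated $4$-gonal family $(G,\{A_i\}_{i=0}^t,\{A_i^*\}_{i=0}^t)$. In $\mathbb{R}[G]$ put $S:=\sum_{i=0}^t(sA_i+A_i^* )$ and $T:=\sum_{i=0}^t(tA_i-A_i^* )$. Let $\chi$ be a nonlinear irreducible complex character of $G$, extended linearly to $\mathbb{R}[G]$. Then \[\chi(S)=s(s+t)\,\omega_\chi,\qquad \chi(T)=\frac{(s+t)st}{\gcd(s,t)}\,z_\chi\] for some nonnegative integers $\omega_\chi, z_\chi$.
   Context: A generalized quadrangle of order $(s,t)$: each line has $s+1$ points, each point is on $t+1$ lines, and for each non-incident point-line pair $(P,\ell)$ there is a unique point on $\ell$ collinear with $P$. An elation about $P$ is an automorphism that is the identity or fixes each line through $P$ and no point not collinear with $P$. $\mathcal{S}$ is an elation generalized quadrangle with base point $P$ and elation group $G$ if $G$ consists of elations about $P$ and acts regularly on the points not collinear with $P$. The associated $4$-gonal family: fix a point $y$ not collinear with $P$, let $M_0,\dots,M_t$ be the lines through $y$, let $z_i$ be the unique point of $M_i$ collinear with $P$, and let $A_i$, $A_i^*$ be the stabilizers in $G$ of $M_i$ and $z_i$ respectively. In $\mathbb{R}[G]$ a subset is identified with the sum of its elements. *)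

(* Defs.v *)
From mathcomp Require Import all_boot all_order all_algebra all_fingroup all_solvable all_field all_character.
Set Implicit Arguments. Unset Strict Implicit. Unset Printing Implicit Defensive.
Import GRing.Theory Num.Theory.

Section GQ.
Variable T : finType.
Implicit Types (L : {set {set T}}) (x y p : T) (l : {set T}).

(* x and y are collinear (x = y allowed, as usual: x ~ y) *)
Definition collinear L x y : bool := [exists l in L, (x \in l) && (y \in l)].

Definition GQ L (s t : nat) : Prop :=
  [/\ 0 < s, 0 < t,
      forall l, l \in L -> #|l| = s.+1,
      forall x, #|[set l in L | x \in l]| = t.+1 &
      forall x l, l \in L -> x \notin l ->
        #|[set z in l | collinear L x z]| = 1].

Definition is_aut L (g : {perm T}) : bool :=
  [forall l : {set T}, (l \in L) == ((fun x => g x) @: l \in L)].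

Definition elation L p (g : {perm T}) : bool :=
  (g == 1%g) ||
  [&& is_aut L g,
      [forall l in L, (p \in l) ==> ((fun x => g x) @: l == l)] &
      [forall x, ~~ collinear L p x ==> (g x != x)]].

Definition EGQ L p (G : {group {perm T}}) : Prop :=
  (forall g, g \in G -> elation L p g) /\
  (forall x z, ~~ collinear L p x -> ~~ collinear L p z ->
     exists! g, g \in G /\ g x = z).

(* for a line M through y, the unique point of M collinear with p *)
Definition zpt L p l : T := odflt p [pick z in l | collinear L p z].

(* A_M : stabilizer of the line M in G ; A_M^* : stabilizer of z_M in G *)
Definition stab_line (G : {group {perm T}}) l : {set {perm T}} :=
  [set g in G | (fun x => g x) @: l == l].
Definition stab_pt (G : {group {perm T}}) z : {set {perm T}} :=
  [set g in G | g z == z].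

End GQ.

Local Open Scope ring_scope.
Definition chi_S (T : finType) (L : {set {set T}}) (s : nat) (p y : T)
  (G : {group {perm T}}) (chi : 'CF(G)) : algC :=
  \sum_(M in L | y \in M)
     (s%:R * \sum_(a in stab_line G M) chi a
      + \sum_(a in stab_pt G (zpt L p M)) chi a).

Definition chi_T (T : finType) (L : {set {set T}}) (t : nat) (p y : T)
  (G : {group {perm T}}) (chi : 'CF(G)) : algC :=
  \sum_(M in L | y \in M)
     (t%:R * \sum_(a in stab_line G M) chi a
      - \sum_(a in stab_pt G (zpt L p M)) chi a).

(* Main.v *)
Require Import Defs.
From mathcomp Require Import all_boot all_order all_algebra all_fingroup all_solvable all_field all_character.
From mathcomp Require Import ring lra zify.
Set Implicit Arguments. Unset Strict Implicit. Unset Printing Implicit Defensive.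
Import GRing.Theory Num.Theory.

Section MX.
Local Open Scope ring_scope.
Lemma tr_idem n (A : 'M[algC]_n) : A *m A = A -> \tr A = (\rank A)%:R.
Proof.
move=> AA.
have eC := mulmx_base A.
have h1 : col_base A *m row_base A *m col_base A = col_base A.
  apply: (row_free_inj (row_base_free A)).
  by rewrite eC -mulmxA eC AA.
have h2 : row_base A *m col_base A = 1%:M.
  apply: (row_full_inj (col_base_full A)).
  by rewrite mulmx1 mulmxA.
by rewrite -{1}eC mxtrace_mulC h2 mxtrace1.
Qed.

Lemma tr_idem_scal n (A : 'M[algC]_n) (c : nat) : (0 < c)%N ->
  A *m A = c%:R *: A -> \tr A = (c * \rank (c%:R^-1 *: A))%:R.
Proof.
move=> c0 AA.
have cn0 : (c%:R : algC) != 0 by rewrite pnatr_eq0 -lt0n.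
rewrite natrM -tr_idem.
  by rewrite mxtraceZ mulrA divff // mul1r.
by rewrite -scalemxAl -scalemxAr AA !scalerA; congr (_ *: _); field.
Qed.

Lemma mx_main n (I : finType) (P : pred I) (a b : I -> 'M[algC]_n) (s t : nat) :
 (0 < s)%N -> (0 < t)%N ->
 (forall i, P i -> a i *m a i = s%:R *: a i) ->
 (forall i, P i -> b i *m b i = (s*t)%:R *: b i) ->
 (forall i, P i -> a i *m b i = s%:R *: b i) ->
 (forall i, P i -> b i *m a i = s%:R *: b i) ->
 (forall i j, P i -> P j -> i != j -> a j *m b i = 0 /\ b i *m a j = 0) ->
 (\sum_(i | P i) a i) *m (\sum_(i | P i) a i) =
   (s+t)%:R *: (\sum_(i | P i) a i) - \sum_(i | P i) b i ->
 exists k rF rP : nat, \tr (\sum_(i | P i) a i) = (s*k)%:R /\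
   \tr (\sum_(i | P i) a i) = (s*rF + (s+t)*rP)%:R /\
   \tr (\sum_(i | P i) b i) = (s*t*rF)%:R.
Proof.
move=> s0 t0 aa bb ab ba abij.
set X := \sum_(i | P i) a i; set Y := \sum_(i | P i) b i => XX.
have sn0 : (s%:R : algC) != 0 by rewrite pnatr_eq0 -lt0n.
have tn0 : (t%:R : algC) != 0 by rewrite pnatr_eq0 -lt0n.
have stn0 : ((s*t)%:R : algC) != 0 by rewrite natrM mulf_neq0.
have spt0 : ((s+t)%:R : algC) != 0 by rewrite pnatr_eq0 addn_eq0 negb_and -!lt0n s0.
have XY : X *m Y = s%:R *: Y.
  rewrite /Y mulmx_sumr scaler_sumr; apply: eq_bigr => i Pi.
  rewrite /X mulmx_suml (bigD1 i) //= ab // big1 ?addr0 // => j /andP[Pj ji].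
  by have [] := abij i j Pi Pj; first by rewrite eq_sym.
have YX : Y *m X = s%:R *: Y.
  rewrite /Y mulmx_suml scaler_sumr; apply: eq_bigr => i Pi.
  rewrite /X mulmx_sumr (bigD1 i) //= ba // big1 ?addr0 // => j /andP[Pj ji].
  by have [] := abij i j Pi Pj; first by rewrite eq_sym.
have YY : Y *m Y = (s*t)%:R *: Y.
  rewrite /Y mulmx_suml scaler_sumr; apply: eq_bigr => i Pi.
  rewrite mulmx_sumr (bigD1 i) //= bb // big1 ?addr0 // => j /andP[Pj ji].
  have -> : b i = s%:R^-1 *: (b i *m a i) by rewrite ba // scalerA mulVf // scale1r.
  by rewrite -scalemxAl -mulmxA; have [-> _] := abij j i Pj Pi ji; rewrite mulmx0 scaler0.
pose F := (s*t)%:R^-1 *: Y.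
have XF : X *m F = s%:R *: F by rewrite /F -scalemxAr XY !scalerA mulrC.
have FX : F *m X = s%:R *: F by rewrite /F -scalemxAl YX !scalerA mulrC.
have FF : F *m F = F.
  rewrite /F -scalemxAl -scalemxAr YY !scalerA; congr (_ *: _); by field; rewrite tn0 sn0.
have XX' : X *m X = (s+t)%:R *: X - (s*t)%:R *: F.
  by rewrite XX /F scalerA divff // scale1r.
have YF : Y = (s*t)%:R *: F by rewrite /F scalerA divff // scale1r.
clearbody F. pose P' := X - s%:R *: F.
have PP : P' *m P' = (s+t)%:R *: P'.
  rewrite /P' mulmxBl !mulmxBr -!scalemxAl -!scalemxAr XX' XF FX FF subrr subr0.
  rewrite scalerBr -addrA -opprD !scalerA -scalerDl; congr (_ - _ *: _).
  by rewrite -!natrM -natrD mulnDl mulnC addnC.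
have trF := tr_idem FF.
have trP := tr_idem_scal (ltn_addr t s0) PP.
exists (\sum_(i | P i) \rank (s%:R^-1 *: a i))%N, (\rank F), (\rank ((s + t)%:R^-1 *: P')).
split; last split.
- rewrite /X raddf_sum big_distrr natr_sum /=; apply: eq_bigr => i Pi.
  exact: tr_idem_scal s0 (aa i Pi).
- have -> : X = P' + s%:R *: F by rewrite /P' subrK.
  by rewrite mxtraceD mxtraceZ trF trP -!natrM -natrD addnC.
- by rewrite YF mxtraceZ trF -natrM.
Qed.

End MX.

Section Geo.
Variables (T : finType) (L : {set {set T}}) (s t : nat) (p : T) (G : {group {perm T}}) (y : T).
Hypothesis hGQ : GQ L s t.
Hypothesis hE : EGQ L p G.
Hypothesis hy : ~~ collinear L p y.

Local Notation col := (collinear L).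

Lemma s_gt0 : 0 < s. Proof. by case: hGQ. Qed.
Lemma t_gt0 : 0 < t. Proof. by case: hGQ. Qed.
Lemma card_line l : l \in L -> #|l| = s.+1. Proof. by case: hGQ => _ _ h _ _; apply: h. Qed.
Lemma card_pencil x : #|[set l in L | x \in l]| = t.+1. Proof. by case: hGQ. Qed.
Lemma gq_ax x l : l \in L -> x \notin l -> #|[set z in l | col x z]| = 1.
Proof. by case: hGQ => _ _ _ _ h; apply: h. Qed.

Lemma col_line l x w : l \in L -> x \in l -> w \in l -> col x w.
Proof. by move=> Ll xl wl; apply/existsP; exists l; rewrite Ll xl wl. Qed.

Lemma colE x w : col x w -> exists l, [/\ l \in L, x \in l & w \in l].
Proof. by case/existsP => l /and3P[]; exists l. Qed.

Lemma col_sym x w : col x w = col w x.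
Proof.
by apply/idP/idP => /colE[l [Ll h1 h2]]; apply: (col_line Ll).
Qed.

Lemma line_uniq l1 l2 x w : l1 \in L -> l2 \in L -> x != w ->
  x \in l1 -> w \in l1 -> x \in l2 -> w \in l2 -> l1 = l2.
Proof.
move=> L1 L2 xw x1 w1 x2 w2; apply/eqP; apply: contraT => ne.
have : ~~ (l2 \subset l1).
  by apply: contra ne => sub; rewrite eq_sym eqEcard sub (card_line L1) (card_line L2) ltnSn.
case/subsetPn => u u2 u1.
have h1 := gq_ax L1 u1.
have : 1 < #|[set z in l1 | col u z]|.
  apply/card_gt1P; exists x, w.
  by rewrite !inE x1 w1 xw (col_line L2 u2 x2) (col_line L2 u2 w2).
by rewrite h1.
Qed.

Lemma pt_set x l : l \in L -> x \notin l ->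
  exists w, [set z in l | col x z] = [set w].
Proof. by move=> Ll xl; apply/cards1P; rewrite gq_ax. Qed.

Lemma uniq_pt x l z1 z2 : l \in L -> x \notin l -> z1 \in l -> z2 \in l ->
  col x z1 -> col x z2 -> z1 = z2.
Proof.
move=> Ll xl z1l z2l c1 c2; have [w hw] := pt_set Ll xl.
have : z1 \in [set z in l | col x z] by rewrite inE z1l c1.
have : z2 \in [set z in l | col x z] by rewrite inE z2l c2.
by rewrite hw !inE => /eqP -> /eqP ->.
Qed.

Lemma ex_pt x l : l \in L -> x \notin l -> exists2 w, w \in l & col x w.
Proof.
move=> Ll xl; have [w hw] := pt_set Ll xl.
have : w \in [set z in l | col x z] by rewrite hw set11.
by rewrite inE => /andP[]; exists w.
Qed.

Definition lsum u v := \sum_(N in L | u \in N) (v \in N : nat).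

Lemma lsumE u v : lsum u v = if u == v then t.+1 else (col u v : nat).
Proof.
case: eqP => [<-|/eqP uv].
  rewrite /lsum (eq_bigr (fun _ => 1%N)) => [|N /andP[_ ->]//].
  rewrite sum1dep_card -(card_pencil u); apply: eq_card => N; by rewrite !inE.
case: (boolP (col u v)) => [/colE[N0 [L0 u0 v0]]|ncol].
  rewrite /lsum (bigD1 N0) /=; last by rewrite L0 u0.
  rewrite v0 big1 // => N /andP[/andP[LN uN] NN0]; apply/eqP; rewrite eqb0.
  apply: contra NN0 => vN; apply/eqP; exact: (line_uniq LN L0 uv).
rewrite /lsum big1 // => N /andP[LN uN]; apply/eqP; rewrite eqb0.
by apply: contra ncol => vN; exact: (col_line LN).
Qed.

Lemma elt_elation g : g \in G -> elation L p g.
Proof. by case: hE => h _; apply: h. Qed.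

Lemma imset1 (l : {set T}) : (fun x => (1%g : {perm T}) x) @: l = l.
Proof. by rewrite (eq_imset _ (@perm1 T)) imset_id. Qed.

Lemma g_line g l : g \in G -> l \in L -> (fun x => g x) @: l \in L.
Proof.
move=> gG Ll; case/orP: (elt_elation gG) => [/eqP->|/and3P[aut _ _]].
  by rewrite imset1.
by move/forallP: aut => /(_ l)/eqP <-.
Qed.

Lemma g_pline g l : g \in G -> l \in L -> p \in l -> (fun x => g x) @: l = l.
Proof.
move=> gG Ll pl; case/orP: (elt_elation gG) => [/eqP->|/and3P[_ fx _]].
  by rewrite imset1.
by move/forall_inP: fx => /(_ l Ll); rewrite pl => /eqP.
Qed.

Lemma col_g g x w : g \in G -> col (g x) (g w) = col x w.
Proof.
suff H : forall g x w, g \in G -> col x w -> col (g x) (g w).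
  move=> gG; apply/idP/idP; last exact: H.
  by move=> c; have := H g^-1%g _ _ (groupVr gG) c; rewrite !permK.
move=> g0 x0 w0 gG /colE[l [Ll xl wl]].
by apply: (col_line (g_line gG Ll)); apply: imset_f.
Qed.

Lemma gp g : g \in G -> g p = p.
Proof.
move=> gG.
have : 1 < #|[set l in L | p \in l]| by rewrite card_pencil ltnS t_gt0.
case/card_gt1P => l1 [l2 []]; rewrite !inE => /andP[L1 p1] /andP[L2 p2] ne.
apply/eqP; apply: contraT => gpp.
have g1 : g p \in l1 by have := imset_f (fun x => g x) p1; rewrite g_pline.
have g2 : g p \in l2 by have := imset_f (fun x => g x) p2; rewrite g_pline.
by rewrite (line_uniq L1 L2 gpp g1 p1 g2 p2) eqxx in ne.
Qed.

Lemma O_g g x : g \in G -> col p (g x) = col p x.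
Proof. by move=> gG; rewrite -{1}(gp gG) col_g. Qed.

Lemma reg_inj g h : g \in G -> h \in G -> g y = h y -> g = h.
Proof.
move=> gG hG e; case: hE => _ reg.
have ngy : ~~ col p (g y) by rewrite O_g.
have [g0 [_ u]] := reg y (g y) hy ngy.
by rewrite -(u g) ?(u h).
Qed.

Lemma reg_ex x : ~~ col p x -> exists2 g, g \in G & g y = x.
Proof.
move=> hx; case: hE => _ reg; have [g0 [[g0G e] _]] := reg y x hy hx.
by exists g0.
Qed.


Lemma pM M : M \in L -> y \in M -> p \notin M.
Proof. by move=> LM yM; apply: contra hy => pM; exact: col_line LM pM yM. Qed.

Lemma zM_spec M : M \in L -> y \in M ->
  [/\ zpt L p M \in M, col p (zpt L p M) & zpt L p M != p].
Proof.
move=> LM yM; rewrite /zpt; case: pickP => [z /andP[zM cz] | none] /=.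
  by split => //; apply: contraNneq (pM LM yM) => <-.
have [w wM cw] := ex_pt LM (pM LM yM).
by have := none w; rewrite wM cw.
Qed.

Lemma zM_uniq M w : M \in L -> y \in M -> w \in M -> col p w -> w = zpt L p M.
Proof.
move=> LM yM wM cw; have [zM cz _] := zM_spec LM yM.
exact: (uniq_pt LM (pM LM yM) wM zM cw cz).
Qed.

Lemma keyK g z x : g \in G -> col p z -> z != p -> ~~ col p x ->
  col x z -> col x (g z) -> g z = z.
Proof.
move=> gG cpz zp ncx cxz cxgz; have [lz [Lz pz zz]] := colE cpz.
have gz : g z \in lz by have := imset_f (fun x => g x) zz; rewrite g_pline.
have xl : x \notin lz by apply: contra ncx; exact: col_line Lz pz.
exact: (uniq_pt Lz xl gz zz cxgz cxz).
Qed.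

Lemma claimA M g : M \in L -> y \in M -> g \in G ->
  (g \in stab_line G M) = (g y \in M).
Proof.
move=> LM yM gG; rewrite inE gG /=; apply/eqP/idP.
  by move=> e; rewrite -e; apply: imset_f.
move=> gyM; set z := zpt L p M; have [zM cz zp] := zM_spec LM yM.
have ncx : ~~ col p (g y) by rewrite O_g.
have e : g z = z.
  apply: (keyK gG cz zp ncx); first exact: col_line LM gyM zM.
  by rewrite col_g //; exact: col_line LM yM zM.
have gML := g_line gG LM.
have gyz : g y != z by apply: contraNneq ncx => ->.
apply: (line_uniq gML LM gyz) => //; first exact: imset_f.
by rewrite -e; apply: imset_f.
Qed.

Lemma claimAs M g : M \in L -> y \in M -> g \in G ->
  (g \in stab_pt G (zpt L p M)) = col (g y) (zpt L p M).
Proof.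
move=> LM yM gG; rewrite inE gG /=; set z := zpt L p M.
have [zM cz zp] := zM_spec LM yM.
apply/eqP/idP.
  by move=> e; rewrite -[X in col _ X]e col_g //; exact: col_line LM yM zM.
move=> c; have ncx : ~~ col p (g y) by rewrite O_g.
apply: (keyK gG cz zp ncx c); rewrite col_g //; exact: col_line LM yM zM.
Qed.

Lemma stab_line_group M : group_set (stab_line G M).
Proof.
apply/andP; split; first by rewrite inE group1 imset1 eqxx.
apply/subsetP => _ /mulsgP[a b aA bA ->].
move: aA bA; rewrite !inE => /andP[aG /eqP ea] /andP[bG /eqP eb].
rewrite groupM //=; apply/eqP.
transitivity ((fun x => b x) @: ((fun x => a x) @: M)); last by rewrite ea eb.
by rewrite -imset_comp; apply: eq_imset => x; rewrite /= permM.
Qed.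

Lemma stab_pt_group z : group_set (stab_pt G z).
Proof.
apply/andP; split; first by rewrite inE group1 perm1 eqxx.
apply/subsetP => _ /mulsgP[a b aA bA ->].
move: aA bA; rewrite !inE => /andP[aG /eqP ea] /andP[bG /eqP eb].
by rewrite groupM //= permM ea eb.
Qed.

Lemma stab_line_sub M : stab_line G M \subset G.
Proof. by apply/subsetP => g; rewrite inE => /andP[]. Qed.
Lemma stab_pt_sub z : stab_pt G z \subset G.
Proof. by apply/subsetP => g; rewrite inE => /andP[]. Qed.

Lemma AsubAs M : M \in L -> y \in M -> stab_line G M \subset stab_pt G (zpt L p M).
Proof.
move=> LM yM; apply/subsetP => g gA.
have gG := subsetP (stab_line_sub M) g gA.
rewrite claimAs // ; rewrite claimA // in gA.
by have [zM _ _] := zM_spec LM yM; exact: col_line LM gA zM.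
Qed.

Lemma TI_AsA M N : M \in L -> y \in M -> N \in L -> y \in N -> M != N ->
  stab_pt G (zpt L p M) :&: stab_line G N = 1%g.
Proof.
move=> LM yM LN yN MN; apply/setP => g; rewrite [in RHS]inE.
apply/setIP/eqP => [[gs gl]|->]; last by split; rewrite inE group1 ?perm1 ?imset1 eqxx.
have gG := subsetP (stab_pt_sub _) g gs.
rewrite claimAs // in gs; rewrite claimA // in gl.
have [zM cz zp] := zM_spec LM yM.
have zN : zpt L p M \notin N.
  apply: contra MN => zN; apply/eqP; apply: (line_uniq LM LN _ yM zM yN zN).
  by apply: contraNneq hy => ->.
have e : g y = y.
  apply: (uniq_pt LN zN gl yN); rewrite col_sym //.
  exact: col_line LM yM zM.
by apply: (reg_inj gG (group1 G)); rewrite perm1.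
Qed.

Lemma imA M : M \in L -> y \in M ->
  [set g y | g : {perm T} in stab_line G M] = [set u in M | ~~ col p u].
Proof.
move=> LM yM; apply/setP => u; rewrite inE; apply/imsetP/andP.
  case=> g gA ->; have gG := subsetP (stab_line_sub M) g gA.
  by rewrite -claimA // O_g.
case=> uM nu; have [g gG gy] := reg_ex nu.
by exists g => //; rewrite claimA // gy.
Qed.

Lemma imAs M : M \in L -> y \in M ->
  [set g y | g : {perm T} in stab_pt G (zpt L p M)] = [set u | ~~ col p u & col u (zpt L p M)].
Proof.
move=> LM yM; apply/setP => u; rewrite inE; apply/imsetP/andP.
  case=> g gA ->; have gG := subsetP (stab_pt_sub _) g gA.
  by rewrite -claimAs // O_g.
case=> nu cu; have [g gG gy] := reg_ex nu.
by exists g => //; rewrite claimAs // gy.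
Qed.

Lemma inj_y (A : {set {perm T}}) : A \subset G -> {in A &, injective (fun g : {perm T} => g y)}.
Proof. by move=> sAG g h gA hA; apply: reg_inj; apply: (subsetP sAG). Qed.

Lemma lineO M : M \in L -> y \in M -> [set u in M | ~~ col p u] = M :\ zpt L p M.
Proof.
move=> LM yM; apply/setP => u; rewrite !inE andbC; case uM: (u \in M) => //=.
have [zM cz _] := zM_spec LM yM.
rewrite !andbT; apply/idP/idP => [nu|uz]; first by apply: contra nu => /eqP ->.
by apply: contra uz => cu; apply/eqP; exact: zM_uniq.
by rewrite !andbF.
Qed.

Lemma card_lineO M : M \in L -> y \in M -> #|[set u in M | ~~ col p u]| = s.
Proof.
move=> LM yM; rewrite lineO //; have [zM _ _] := zM_spec LM yM.
by have := cardsD1 (zpt L p M) M; rewrite zM card_line // add1n => -[].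
Qed.

Lemma card_A M : M \in L -> y \in M -> #|stab_line G M| = s.
Proof.
move=> LM yM; rewrite -(card_in_imset (inj_y (stab_line_sub M))).
by rewrite imA // card_lineO.
Qed.


Lemma card_nbr z : col p z -> z != p -> #|[set x | ~~ col p x & col x z]| = s * t.
Proof.
move=> cpz zp.
have e1 : #|[set x | ~~ col p x & col x z]| = \sum_(x | ~~ col p x) lsum z x.
  rewrite -sum1dep_card big_mkcondr /=; apply: eq_bigr => x nx.
  rewrite lsumE; have -> : (z == x) = false.
    by apply/eqP => zx; rewrite -zx cpz in nx.
  by rewrite col_sym; case: (col x z).
rewrite e1 /lsum exchange_big /=.
have e2 : forall N, N \in L -> z \in N ->
    \sum_(x | ~~ col p x) (x \in N : nat) = if p \in N then 0 else s.
  move=> N LN zN; case pN: (p \in N).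
    rewrite big1 // => x nx; apply/eqP; rewrite eqb0; apply: contra nx => xN.
    exact: col_line LN pN xN.
  have -> : \sum_(x | ~~ col p x) (x \in N : nat) = #|N :\ z|.
    transitivity #|[set x | ~~ col p x & x \in N]|.
      rewrite -sum1dep_card big_mkcondr /=; apply: eq_bigr => x _.
      by case: (x \in N).
    apply: eq_card => x; rewrite !inE; case xN: (x \in N); rewrite /= ?andbT ?andbF //.
    apply/idP/idP => [nx|xz]; first by apply: contra nx => /eqP ->.
    apply: contra xz => cx; apply/eqP.
    have pN' : p \notin N by rewrite pN.
    exact: (uniq_pt LN pN' xN zN cx cpz).
  by have := cardsD1 z N; rewrite zN card_line // add1n => -[].
rewrite (eq_bigr (fun N : {set T} => if p \in N then 0 else s)) => [|N /andP[]]; last exact: e2.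
have e3 : \sum_(N in L | z \in N) (if p \in N then 0 else s) + s * lsum z p = s * lsum z z.
  rewrite /lsum !big_distrr -big_split /=; apply: eq_bigr => N /andP[_ zN].
  by rewrite zN; case: (p \in N); rewrite /= ?muln1 ?muln0 ?addn0 ?add0n.
move: e3; rewrite !lsumE eqxx (negbTE zp) col_sym cpz /=.
lia.
Qed.

Lemma card_As M : M \in L -> y \in M -> #|stab_pt G (zpt L p M)| = s * t.
Proof.
move=> LM yM; rewrite -(card_in_imset (inj_y (stab_pt_sub _))).
have [_ cz zp] := zM_spec LM yM.
by rewrite imAs // card_nbr.
Qed.

Definition lw u v := if u == v then t.+1 else (col u v : nat).

Lemma geo1 N x : N \in L -> y \in N -> ~~ col p x ->
  \sum_(u in [set u in N | ~~ col p u]) lw u x + (col x (zpt L p N) : nat)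
    = (s + t) * (x \in N) + 1.
Proof.
move=> LN yN nx; rewrite lineO //; set z := zpt L p N.
have [zN cz zp] := zM_spec LN yN.
have cardS : #|N :\ z| = s by have := cardsD1 z N; rewrite zN card_line // add1n => -[].
case xN: (x \in N).
  have xS : x \in N :\ z by rewrite !inE xN andbT; apply: contra nx => /eqP ->.
  rewrite (bigD1 x) //= /lw eqxx.
  rewrite (eq_bigr (fun _ => 1%N)) => [|u /andP[uS ux]]; last first.
    rewrite (negbTE ux); move: uS; rewrite !inE => /andP[_ uN].
    by rewrite (col_line LN uN xN).
  rewrite sum1dep_card (col_line LN xN zN).
  have -> : #|[set u | (u \in N :\ z) && (u != x)]| = #|(N :\ z) :\ x|.
    by apply: eq_card => u; rewrite !inE andbC.
  have := cardsD1 x (N :\ z); rewrite xS cardS.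
  have := s_gt0; lia.
have xN' : x \notin N by rewrite xN.
have [w hw] := pt_set LN xN'.
have wN : w \in N.
  have : w \in [set v in N | col x v] by rewrite hw set11.
  by rewrite inE => /andP[].
have colE' : forall u, u \in N -> col x u = (u == w).
  by move=> u uN; have := congr1 (fun A : {set T} => u \in A) hw; rewrite /= !inE uN.
have e : \sum_(u in N :\ z) lw u x = \sum_(u in N :\ z) (u == w : nat).
  apply: eq_bigr => u; rewrite !inE => /andP[_ uN]; rewrite /lw.
  have -> : (u == x) = false by apply/eqP => ux; rewrite -ux uN in xN.
  by rewrite col_sym colE'.
rewrite e colE' // muln0 add0n.
case: (boolP (w \in N :\ z)) => wS.
  rewrite (bigD1 w) //= eqxx big1 => [|u /andP[_ /negbTE ->]] //.
  by move: wS; rewrite !inE eq_sym => /andP[/negbTE ->].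
rewrite big1 => [|u uS]; last first.
  by apply/eqP; rewrite eqb0; apply: contra wS => /eqP <-.
by move: wS; rewrite !inE wN andbT negbK eq_sym => ->.
Qed.

Lemma pointwise g : g \in G ->
  \sum_(N in L | y \in N) \sum_(b in stab_line G N)
      \sum_(M in L | y \in M) ((g * b^-1)%g \in stab_line G M : nat)
  + \sum_(N in L | y \in N) (g \in stab_pt G (zpt L p N) : nat)
  = (s + t) * \sum_(N in L | y \in N) (g \in stab_line G N : nat) + t.+1.
Proof.
move=> gG.
have hx : ~~ col p (g y) by rewrite O_g.
have per : forall N, N \in L -> y \in N ->
   \sum_(b in stab_line G N) \sum_(M in L | y \in M) ((g * b^-1)%g \in stab_line G M : nat)
   + (g \in stab_pt G (zpt L p N) : nat) = (s + t) * (g \in stab_line G N) + 1.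
  move=> N LN yN.
  rewrite claimAs // claimA //.
  rewrite -(geo1 LN yN hx) -imA // big_imset /=; last exact: inj_y (stab_line_sub N).
  congr (_ + _); apply: eq_bigr => b bA.
  have bG := subsetP (stab_line_sub N) b bA.
  have gbG : (g * b^-1)%g \in G by rewrite groupM ?groupV.
  transitivity (lsum y ((g * b^-1)%g y)).
    by apply: eq_bigr => M /andP[LM yM]; rewrite claimA.
  rewrite lsumE /lw permM.
  have -> : (y == b^-1%g (g y)) = (b y == g y).
    by rewrite -(inj_eq (@perm_inj _ b)) permKV.
  by rewrite -(col_g _ _ bG) permKV.
rewrite -big_split /=.
rewrite (eq_bigr (fun N => (s + t) * (g \in stab_line G N) + 1)) => [|N /andP[LN yN]]; last exact: per.
rewrite big_split /= -big_distrr /=; congr (_ + _).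
have := lsumE y y; rewrite eqxx /lsum => <-.
by apply: eq_bigr => N /andP[_ ->].
Qed.

Lemma sub_sum (V : nmodType) (A : {set {perm T}}) (F : {perm T} -> V) : A \subset G ->
  (\sum_(g in G) F g *+ (g \in A) = \sum_(g in A) F g)%R.
Proof.
move=> sAG; rewrite [RHS]big_mkcond [LHS]big_mkcond; apply: eq_bigr => g _.
case gA: (g \in A); last by case: (g \in G); rewrite ?mulr0n.
by rewrite (subsetP sAG g gA) mulr1n.
Qed.

Lemma reidx (V : nmodType) (A : {set {perm T}}) (F : {perm T} -> V) b :
  A \subset G -> b \in G ->
  (\sum_(a in A) F (a * b)%g = \sum_(g in G) F g *+ ((g * b^-1)%g \in A))%R.
Proof.
move=> sAG bG; rewrite [RHS](reindex_inj (mulIg b)) /=.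
rewrite [RHS](eq_bigl (fun a => a \in G)) => [|a]; last by rewrite /= groupMr.
under [RHS]eq_bigr do rewrite mulgK.
by rewrite (sub_sum (fun a => F (a * b)%g)).
Qed.

Lemma swap_sum (V : nmodType) (I : finType) (P : pred I) (F : {perm T} -> V)
   (f : I -> {perm T} -> nat) :
  (\sum_(i | P i) \sum_(g in G) F g *+ f i g = \sum_(g in G) F g *+ (\sum_(i | P i) f i g)%N)%R.
Proof. by rewrite exchange_big; apply: eq_bigr => g _; rewrite sumrMnr. Qed.

Lemma gen_id (V : nmodType) (F : {perm T} -> V) :
  (\sum_(M in L | y \in M) \sum_(N in L | y \in N)
     \sum_(a in stab_line G M) \sum_(b in stab_line G N) F (a * b)%g
  + \sum_(N in L | y \in N) \sum_(a in stab_pt G (zpt L p N)) F a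
  = (\sum_(N in L | y \in N) \sum_(a in stab_line G N) F a) *+ (s + t)
    + (\sum_(g in G) F g) *+ t.+1)%R.
Proof.
have e1 : (\sum_(M in L | y \in M) \sum_(N in L | y \in N)
     \sum_(a in stab_line G M) \sum_(b in stab_line G N) F (a * b)%g
   = \sum_(g in G) F g *+ (\sum_(N in L | y \in N) \sum_(b in stab_line G N)
      \sum_(M in L | y \in M) ((g * b^-1)%g \in stab_line G M : nat))%N)%R.
  rewrite exchange_big /=.
  transitivity (\sum_(N in L | y \in N) \sum_(b in stab_line G N)
      \sum_(M in L | y \in M) \sum_(a in stab_line G M) F (a * b)%g)%R.
    apply: eq_bigr => N _; rewrite -exchange_big /=.
    by apply: eq_bigr => M _; rewrite exchange_big.
  rewrite -swap_sum; apply: eq_bigr => N /andP[LN yN].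
  rewrite -swap_sum; apply: eq_bigr => b bA.
  have bG := subsetP (stab_line_sub N) b bA.
  rewrite -swap_sum; apply: eq_bigr => M _.
  exact: reidx (stab_line_sub M) bG.
have e2 : forall (B : {set T} -> {set {perm T}}), (forall N, B N \subset G) ->
    (\sum_(N in L | y \in N) \sum_(a in B N) F a
    = \sum_(g in G) F g *+ (\sum_(N in L | y \in N) (g \in B N : nat))%N)%R.
  move=> B sB; rewrite -swap_sum; apply: eq_bigr => N _.
  by rewrite sub_sum.
rewrite e1 (e2 (fun N => stab_pt G (zpt L p N))) => [|N]; last exact: stab_pt_sub.
rewrite (e2 (fun N => stab_line G N)) => [|N]; last exact: stab_line_sub.
rewrite -big_split -sumrMnl -sumrMnl -big_split /=; apply: eq_bigr => g gG.
by rewrite -mulrnDr pointwise // -mulrnA -mulrnDr mulnC.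
Qed.

Lemma sum_pencil (V : nmodType) (c : V) : (\sum_(N in L | y \in N) c = c *+ t.+1)%R.
Proof.
rewrite -(card_pencil y) -sumr_const; apply: eq_bigl => N; by rewrite inE.
Qed.

Lemma cardG : #|G| = (s * s * t)%N.
Proof.
have := gen_id (fun _ => 1%R : algC).
rewrite (eq_bigr (fun _ => ((s * s)%:R *+ t.+1)%R)) => [|M /andP[LM yM]]; last first.
  rewrite -sum_pencil; apply: eq_bigr => N /andP[LN yN].
  rewrite (eq_bigr (fun _ => s%:R)%R) => [|a _]; last by rewrite sumr_const card_A.
  by rewrite sumr_const card_A // -mulrnA.
rewrite sum_pencil.
rewrite (eq_bigr (fun _ => ((s * t)%:R)%R)) => [|M /andP[LM yM]]; last first.
  by rewrite sumr_const card_As.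
rewrite sum_pencil.
rewrite (eq_bigr (fun _ => (s%:R)%R)) => [|M /andP[LM yM]]; last first.
  by rewrite sumr_const card_A.
rewrite sum_pencil sumr_const.
rewrite -!mulrnA -!mulrnDr => /eqP; rewrite eqr_nat => /eqP.
have := t_gt0; have := s_gt0; nia.
Qed.

Section Rep.
Variables (n : nat) (rG : mx_representation algC G n).
Hypothesis hRG : (\sum_(g in G) \tr (rG g) = 0)%R.

Definition Rs (A : {set {perm T}}) : 'M[algC]_n := (\sum_(g in A) rG g)%R.

Lemma R1 (H K : {group {perm T}}) : H \subset K -> K \subset G ->
  (Rs H *m Rs K = #|H|%:R *: Rs K)%R /\ (Rs K *m Rs H = #|H|%:R *: Rs K)%R.
Proof.
move=> sHK sKG; have sHG := subset_trans sHK sKG.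
have inv : forall h, h \in H ->
    (\sum_(k in K) rG (h * k)%g = Rs K)%R /\ (\sum_(k in K) rG (k * h)%g = Rs K)%R.
  move=> h hH; have hK := subsetP sHK h hH; split.
    by rewrite /Rs [RHS](reindex_inj (mulgI h)); apply: eq_bigl => k; rewrite /= groupMl.
  by rewrite /Rs [RHS](reindex_inj (mulIg h)); apply: eq_bigl => k; rewrite /= groupMr.
split.
  rewrite [in LHS]/Rs mulmx_suml (eq_bigr (fun _ => Rs K)) => [|h hH].
    by rewrite sumr_const scaler_nat.
  rewrite mulmx_sumr -(inv h hH).1; apply: eq_bigr => k kK.
  by rewrite repr_mxM ?(subsetP sHG h hH) ?(subsetP sKG k kK).
rewrite [in LHS]/Rs mulmx_sumr (eq_bigr (fun _ => Rs K)) => [|h hH].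
  by rewrite sumr_const scaler_nat.
rewrite mulmx_suml -(inv h hH).2; apply: eq_bigr => k kK.
by rewrite repr_mxM ?(subsetP sHG h hH) ?(subsetP sKG k kK).
Qed.

Lemma R2 (H K : {group {perm T}}) : H \subset G -> K \subset G -> H :&: K = 1%g ->
  (#|H| * #|K| = #|G|)%N -> (Rs H *m Rs K = Rs G)%R.
Proof.
move=> sHG sKG tI hc.
have HK : (H * K)%g = G.
  by apply/eqP; rewrite eqEcard mulG_subG sHG sKG /= TI_cardMg // hc leqnn.
have cnt : forall g, g \in G -> (\sum_(k in K) ((g * k^-1)%g \in H : nat))%N = 1%N.
  move=> g; rewrite -HK => /mulsgP[h k hH kK ->].
  rewrite (bigD1 k) //= mulgK hH big1 // => k' /andP[k'K k'k].
  apply/eqP; rewrite eqb0; apply: contra k'k => hk'.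
  have : (k * k'^-1)%g \in H :&: K.
    rewrite inE [(_ * _)%g \in K]groupM ?groupV // andbT.
    have -> : (k * k'^-1 = h^-1 * (h * k * k'^-1))%g by rewrite !mulgA mulVg mul1g.
    by rewrite groupM ?groupV.
  by rewrite tI inE -eq_mulgV1 eq_sym.
rewrite /Rs mulmx_suml.
transitivity (\sum_(k in K) \sum_(h in H) rG (h * k)%g)%R.
  rewrite (eq_bigr (fun h => \sum_(k in K) rG (h * k)%g)%R) => [|h hH].
    exact: exchange_big.
  rewrite mulmx_sumr; apply: eq_bigr => k kK.
  by rewrite repr_mxM ?(subsetP sHG h hH) ?(subsetP sKG k kK).
rewrite (eq_bigr (fun k => \sum_(g in G) rG g *+ ((g * k^-1)%g \in H))%R) => [|k kK]; last first.
  exact: reidx sHG (subsetP sKG k kK).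
rewrite swap_sum; apply: eq_bigr => g gG; by rewrite cnt.
Qed.

Lemma RG0 : Rs G = 0%R.
Proof.
have [GG _] := R1 (subxx G) (subxx G).
have := tr_idem_scal (cardG_gt0 G) GG.
have -> : (\tr (Rs G) = 0)%R by rewrite /Rs raddf_sum hRG.
move/esym/eqP; rewrite pnatr_eq0 muln_eq0 eqn0Ngt cardG_gt0 /= mxrank_eq0.
rewrite scalemx_eq0 invr_eq0 pnatr_eq0 eqn0Ngt cardG_gt0 /=.
by move/eqP.
Qed.

Lemma final_mx : exists k rF rP : nat,
  (\tr (\sum_(N in L | y \in N) Rs (stab_line G N)) = (s * k)%:R)%R /\
  (\tr (\sum_(N in L | y \in N) Rs (stab_line G N)) = (s * rF + (s + t) * rP)%:R)%R /\
  (\tr (\sum_(N in L | y \in N) Rs (stab_pt G (zpt L p N))) = (s * t * rF)%:R)%R.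
Proof.
pose AG N := Group (stab_line_group N).
pose AsG N := Group (stab_pt_group (zpt L p N)).
have hX : forall N, N \in L -> y \in N -> AG N \subset AsG N.
  by move=> N LN yN; exact: AsubAs.
apply: (mx_main (P := fun N => (N \in L) && (y \in N))) s_gt0 t_gt0 _ _ _ _ _ _.
- move=> N /andP[LN yN].
  have := (R1 (H := AG N) (K := AG N) (subxx _) (stab_line_sub N)).1.
  by rewrite /= card_A.
- move=> N /andP[LN yN].
  have := (R1 (H := AsG N) (K := AsG N) (subxx _) (stab_pt_sub _)).1.
  by rewrite /= card_As.
- move=> N /andP[LN yN].
  have := (R1 (H := AG N) (K := AsG N) (hX N LN yN) (stab_pt_sub _)).1.
  by rewrite /= card_A.
- move=> N /andP[LN yN].
  have := (R1 (H := AG N) (K := AsG N) (hX N LN yN) (stab_pt_sub _)).2.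
  by rewrite /= card_A.
- move=> N M /andP[LN yN] /andP[LM yM] NM.
  have tI := TI_AsA LN yN LM yM NM.
  have cG : (#|AsG N| * #|AG M| = #|G|)%N.
    by rewrite /= card_A // card_As // cardG mulnAC mulnC mulnA.
  split.
    have := R2 (H := AG M) (K := AsG N) (stab_line_sub _) (stab_pt_sub _).
    by rewrite setIC tI mulnC cG RG0 => /(_ erefl erefl).
  have := R2 (H := AsG N) (K := AG M) (stab_pt_sub _) (stab_line_sub _).
  by rewrite tI cG RG0 => /(_ erefl erefl).
- set X := (\sum_(i | _) _)%R; set Y := (\sum_(i | _) Rs (stab_pt _ _))%R.
  have h := gen_id (fun g => rG g).
  have XXe : (X *m X = \sum_(M in L | y \in M) \sum_(N in L | y \in N)
     \sum_(a in stab_line G M) \sum_(b in stab_line G N) rG (a * b)%g)%R.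
    rewrite /X mulmx_suml; apply: eq_bigr => M _.
    rewrite mulmx_sumr; apply: eq_bigr => N _.
    rewrite /Rs mulmx_suml; apply: eq_bigr => a aA.
    rewrite mulmx_sumr; apply: eq_bigr => b bA.
    by rewrite repr_mxM ?(subsetP (stab_line_sub _) a aA) ?(subsetP (stab_line_sub _) b bA).
  rewrite -XXe -/(Rs G) RG0 mul0rn addr0 in h.
  rewrite scaler_nat; apply/eqP; rewrite -(inj_eq (addIr Y)) subrK; apply/eqP.
  exact: h.
Qed.

End Rep.

End Geo.

Unset Implicit Arguments.
Local Open Scope ring_scope.

Theorem proposition2p6 (T : finType) (L : {set {set T}}) (s t : nat) (p : T)
  (G : {group {perm T}}) (y : T) (i : Iirr G) :
  GQ L s t -> EGQ L p G -> ~~ collinear L p y ->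
  ~~ ('chi[G]_i \is a linear_char) ->
  (exists w : nat, chi_S L s p y 'chi[G]_i = (s * (s + t) * w)%:R) /\
  (exists z : nat, chi_T L t p y 'chi[G]_i = ((s + t) * s * t %/ gcdn s t * z)%:R).
Proof.
move=> hGQ hE hy hlin.
have i0 : i != 0.
  by apply: contra hlin => /eqP ->; rewrite irr0; exact: cfun1_lin_char.
set rG := 'Chi_i.
have chiE : forall g, g \in G -> 'chi_i g = \tr (rG g).
  by move=> g gG; rewrite -irrRepr cfunE gG mulr1n.
have hRG : \sum_(g in G) \tr (rG g) = 0.
  have : '['chi_i, 1] = 0 :> algC by rewrite -irr0 cfdot_irr (negbTE i0).
  rewrite cfdotE => /eqP; rewrite mulf_eq0 invr_eq0 pnatr_eq0 eqn0Ngt cardG_gt0 /= => /eqP e.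
  by apply: etrans e; apply: eq_bigr => g gG; rewrite cfun1E gG conjC1 mulr1 chiE.
have [k [rF [rP [h1 [h2 h3]]]]] := final_mx hGQ hE hy hRG.
have sumE : forall A : {set {perm T}}, A \subset G -> \sum_(a in A) 'chi_i a = \tr (Rs rG A).
  move=> A sAG; rewrite /Rs raddf_sum; apply: eq_bigr => a aA.
  exact: chiE (subsetP sAG a aA).
have XE : \sum_(N in L | y \in N) \sum_(a in stab_line G N) 'chi_i a
    = \tr (\sum_(N in L | y \in N) Rs rG (stab_line G N)).
  by rewrite raddf_sum; apply: eq_bigr => N _; rewrite sumE // stab_line_sub.
have YE : \sum_(N in L | y \in N) \sum_(a in stab_pt G (zpt L p N)) 'chi_i a
    = \tr (\sum_(N in L | y \in N) Rs rG (stab_pt G (zpt L p N))).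
  by rewrite raddf_sum; apply: eq_bigr => N _; rewrite sumE // stab_pt_sub.
have eq1 : (s * k = s * rF + (s + t) * rP)%N.
  by apply/eqP; rewrite -(eqr_nat algC) -h1 h2.
split.
  exists (rF + rP)%N.
  rewrite /chi_S big_split /= -mulr_sumr XE YE h2 h3.
  rewrite -!natrM -natrD; congr (_%:R); nia.
exists ((gcdn s t * rP) %/ s)%N.
rewrite /chi_T sumrB -mulr_sumr XE YE h2 h3.
have s0 : (0 < s)%N by case: hGQ.
have t0 : (0 < t)%N by case: hGQ.
set d := gcdn s t.
have d0 : (0 < d)%N by rewrite gcdn_gt0 s0.
have strP : (s %| t * rP)%N.
  have -> : (t * rP = s * (k - rF - rP))%N by rewrite !mulnBr; nia.
  by rewrite dvdn_mulr.
have sd : (s %| d * rP)%N.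
  by rewrite /d mulnC muln_gcdr dvdn_gcd dvdn_mull // mulnC.
have hq := divnK sd.
have ht := divnK (dvdn_gcdr s t); rewrite -/d in ht.
set q := ((d * rP) %/ s)%N in hq *; set t' := (t %/ d)%N in ht.
have -> : ((s + t) * s * t %/ d = (s + t) * s * t')%N.
  by rewrite -[X in ((_ * X) %/ d)%N]ht mulnA mulnK.
have -> : ((s + t) * s * t' * q = t * (s + t) * rP)%N.
  rewrite -ht; have : (q * s * t' * (s + t'* d) = d * rP * t' * (s + t' * d))%N by rewrite hq.
  nia.
rewrite !natrM !natrD; ring.
Qed.
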